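(* Let $S$ be a commutative ring, $\delta\in S$, and $r,s\ge0$. (1) If $r\ge1$, then $B_{r,s+1}(S,\delta)\,e_{1,r+s+1}=\iota(B_{r,s}(S,\delta))\,e_{1,r+s+1}$. (2) If $s\ge1$, then $B_{r+1,s}(S,\delta)\,e_{1,r+s+1}=\iota'(B_{r,s}(S,\delta))\,e_{1,r+s+1}$.
   Context: Brauer diagrams and the Brauer algebra $B_m(S,\delta)$: an $(m,m)$-Brauer diagram is a perfect matching of top points $\mathbf p_1,\dots,\mathbf p_m$ and bottom points $\bar{\mathbf p}_1,\dots,\bar{\mathbf p}_m$; $B_m(S,\delta)$ is the free $S$-module on such diagrams with product $ab=\delta^kc$, $c$ obtained by stacking $b$ over $a$ and deleting the $k$ closed loops formed. The walled Brauer algebra $B_{r,s}(S,\delta)\subseteq B_{r+s}(S,\delta)$ is the span of those diagrams in which, calling the points with index $\le r$ ''left'' and the others ''right'', no strand joins a top and a bottom point on different sides, and every strand joining two top points or two bottom points joins a left point with a right point. $\iota:B_{r,s}\to B_{r,s+1}$ adds a strand joining $\mathbf p_{r+s+1}$ and $\bar{\mathbf p}_{r+s+1}$; $\iota':B_{r,s}\to B_{r+1,s}$ adds a new leftmost strand joining new points $\mathbf p_1,\bar{\mathbf p}_1$ (shifting the indices of all other points by $1$). $e_{a,b}$ denotes the Brauer diagram joining $\mathbf p_a$ with $\mathbf p_b$, $\bar{\mathbf p}_a$ with $\bar{\mathbf p}_b$, and $\mathbf p_j$ with $\bar{\mathbf p}_j$ for all $j\ne a,b$. *)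

(* Defs.v *)
From HB Require Import structures.
From mathcomp Require Import all_boot all_order all_algebra.
Set Implicit Arguments. Unset Strict Implicit. Unset Printing Implicit Defensive.
Import GRing.Theory.
Local Open Scope ring_scope.

(* Points of an (m,m)-diagram: inl i = top point p_{i+1}, inr i = bottom point
   \bar p_{i+1} (0-indexed). *)
Definition Pt (m : nat) : finType := ('I_m + 'I_m)%type.

(* A candidate diagram: a function on points (the partner map). *)
Definition diagT (m : nat) : finType := {ffun Pt m -> Pt m}.

(* Brauer diagram = perfect matching = fixed-point-free involution. *)
Definition is_diag m (d : diagT m) : bool :=
  [forall x, (d (d x) == x) && (d x != x)].

Definition idx m (p : Pt m) : 'I_m := match p with inl i => i | inr i => i end.
Definition is_top m (p : Pt m) : bool := if p is inl _ then true else false.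
Definition with_idx m n (p : Pt m) (i : 'I_n) : Pt n :=
  if p is inl _ then inl i else inr i.
Definition flip m (p : Pt m) : Pt m :=
  match p with inl i => inr i | inr i => inl i end.

(* ---- stacking b over a (b on top; bottom of b glued to top of a) ---- *)
(* walk fuel down j : we are at middle point j; if down, next follow a from
   the top point j of a; otherwise follow b from bottom point j of b. *)
Fixpoint walk m (b a : diagT m) (fuel : nat) (down : bool) (j : 'I_m) : Pt m :=
  match fuel with
  | 0 => inl j (* unreachable with enough fuel *)
  | fuel'.+1 =>
    if down then
      match a (inl j) with
      | inr k => inr k
      | inl j' => walk b a fuel' false j'
      end
    else
      match b (inr j) with
      | inl k => inl k
      | inr j' => walk b a fuel' true j'
      end
  end.

Definition stack m (b a : diagT m) : diagT m :=
  [ffun p => match p with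
    | inl i => match b (inl i) with
               | inl k => inl k
               | inr j => walk b a (2 * m).+2 true j
               end
    | inr i => match a (inr i) with
               | inr k => inr k
               | inl j => walk b a (2 * m).+2 false j
               end
    end].

Definition mid_rel m (b a : diagT m) : rel 'I_m :=
  fun j j' => (a (inl j) == inl j') || (b (inr j) == inr j').
Definition interior m (b a : diagT m) (j : 'I_m) : bool :=
  is_top (a (inl j)) && ~~ is_top (b (inr j)).
(* number of closed loops: connected components of middle points all of whose
   points are interior, counted via their minimal element *)
Definition loops m (b a : diagT m) : nat :=
  #|[set j : 'I_m | [forall j', connect (mid_rel b a) j j' ==>
                                (interior b a j' && (j <= j')%N)]]|.

Definition balg (S : comPzRingType) m := {ffun diagT m -> S}.

Definition in_Brauer (S : comPzRingType) m (x : balg S m) : Prop :=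
  forall d, x d != 0 -> is_diag d.

(* product: a b = delta^k c, c = stack b over a, extended bilinearly *)
Definition bmul (S : comPzRingType) (delta : S) m (x y : balg S m) : balg S m :=
  [ffun c => \sum_(a | is_diag a) \sum_(b | is_diag b)
      x a * y b * delta ^+ loops b a * (stack b a == c)%:R].

Definition basis (S : comPzRingType) m (d : diagT m) : balg S m :=
  [ffun d' => (d' == d)%:R].

(* walled condition: left points are those with (0-based) index < r *)
Definition walled m (r : nat) (d : diagT m) : bool :=
  [forall p, if is_top p == is_top (d p)
             then ((idx p < r)%N != (idx (d p) < r)%N)
             else ((idx p < r)%N == (idx (d p) < r)%N)].

(* B_{r,s} sits inside B_{r+s}; we take m = r + s and record r *)
Definition in_walled (S : comPzRingType) (r m : nat) (x : balg S m) : Prop :=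
  forall d, x d != 0 -> is_diag d && walled r d.

Definition mapP m n (f : 'I_m -> 'I_n) (p : Pt m) : Pt n :=
  match p with inl i => inl (f i) | inr i => inr (f i) end.

(* iota: new rightmost strand p_{m+1} -- \bar p_{m+1} *)
Definition iota_d m (d : diagT m) : diagT m.+1 :=
  [ffun p => if unlift ord_max (idx p) is Some i
             then mapP (lift ord_max) (d (with_idx p i)) else flip p].
(* iota': new leftmost strand, other indices shifted by one *)
Definition iota'_d m (d : diagT m) : diagT m.+1 :=
  [ffun p => if unlift ord0 (idx p) is Some i
             then mapP (lift ord0) (d (with_idx p i)) else flip p].

Definition iota_alg (S : comPzRingType) m (x : balg S m) : balg S m.+1 :=
  [ffun c => \sum_(d | iota_d d == c) x d].
Definition iota'_alg (S : comPzRingType) m (x : balg S m) : balg S m.+1 :=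
  [ffun c => \sum_(d | iota'_d d == c) x d].

(* e_{a,b} (0-indexed a b) *)
Definition e_d m (a b : 'I_m) : diagT m :=
  [ffun p => if idx p == a then with_idx p b
             else if idx p == b then with_idx p a else flip p].

(* Main.v *)
Require Import Defs.
From HB Require Import structures.
From mathcomp Require Import all_boot all_order all_algebra.
Set Implicit Arguments. Unset Strict Implicit. Unset Printing Implicit Defensive.
Import GRing.Theory.
Local Open Scope ring_scope.

Lemma diagK m (d : diagT m) : is_diag d -> forall p, d (d p) = p.
Proof. by move=> /forallP H p; case/andP: (H p) => /eqP. Qed.
Lemma diagN m (d : diagT m) : is_diag d -> forall p, d p != p.
Proof. by move=> /forallP H p; case/andP: (H p). Qed.
Lemma diag_inj m (d : diagT m) : is_diag d -> injective d.
Proof. by move=> H; apply: (can_inj (diagK H)). Qed.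
Lemma diagI m (d : diagT m) : (forall p, d (d p) = p) -> (forall p, d p != p) -> is_diag d.
Proof. by move=> H1 H2; apply/forallP => p; rewrite H1 eqxx H2. Qed.

Lemma inl_eq m (i j : 'I_m) : (inl i == inl j :> Pt m) = (i == j).
Proof. by apply/eqP/eqP => [[]|->]. Qed.
Lemma inr_eq m (i j : 'I_m) : (inr i == inr j :> Pt m) = (i == j).
Proof. by apply/eqP/eqP => [[]|->]. Qed.
Lemma inlr_eq m (i j : 'I_m) : (inl i == inr j :> Pt m) = false.
Proof. by []. Qed.
Lemma inrl_eq m (i j : 'I_m) : (inr i == inl j :> Pt m) = false.
Proof. by []. Qed.

Definition iota_g n (c : 'I_n.+1) (d : diagT n) : diagT n.+1 :=
  [ffun p => if unlift c (idx p) is Some i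
             then Defs.mapP (lift c) (d (with_idx p i)) else flip p].
Definition colW k (V : pred 'I_k) (p : Pt k) := V (idx p) (+) is_top p.
Definition wall_ok k (V : pred 'I_k) (d : diagT k) :=
  [forall p, colW V (d p) != colW V p].
Lemma wallP k V (d : diagT k) : wall_ok V d -> forall p, colW V (d p) != colW V p.
Proof. by move/forallP. Qed.

Section Gen.
Variable n : nat.
Local Notation m := n.+1.
Variables (c0 c1 : 'I_m).
Hypothesis Hc : c0 != c1.
Local Notation e := (e_d c0 c1).

Lemma e_l0 : e (inl c0) = inl c1. Proof. by rewrite ffunE /= eqxx. Qed.
Lemma e_l1 : e (inl c1) = inl c0.
Proof. by rewrite ffunE /= eq_sym (negbTE Hc) eqxx. Qed.
Lemma e_r0 : e (inr c0) = inr c1. Proof. by rewrite ffunE /= eqxx. Qed.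
Lemma e_r1 : e (inr c1) = inr c0.
Proof. by rewrite ffunE /= eq_sym (negbTE Hc) eqxx. Qed.
Lemma e_lo i : i != c0 -> i != c1 -> e (inl i) = inr i.
Proof. by move=> h0 h1; rewrite ffunE /= (negbTE h0) (negbTE h1). Qed.
Lemma e_ro i : i != c0 -> i != c1 -> e (inr i) = inl i.
Proof. by move=> h0 h1; rewrite ffunE /= (negbTE h0) (negbTE h1). Qed.

Lemma diag_e : is_diag e.
Proof.
have Hc' : c1 != c0 by rewrite eq_sym.
apply: diagI.
  case=> i; (case: (eqVneq i c0) => [->|h0]; last case: (eqVneq i c1) => [->|h1]).
  - by rewrite e_l0 e_l1.
  - by rewrite e_l1 e_l0.
  - by rewrite e_lo // e_ro.
  - by rewrite e_r0 e_r1.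
  - by rewrite e_r1 e_r0.
  - by rewrite e_ro // e_lo.
case=> i; (case: (eqVneq i c0) => [->|h0]; last case: (eqVneq i c1) => [->|h1]).
  - by rewrite e_l0.
  - by rewrite e_l1.
  - by rewrite e_lo.
  - by rewrite e_r0.
  - by rewrite e_r1.
  - by rewrite e_ro.
Qed.
Definition hA (a : diagT m) (q : Pt m) :=
  if q == inl c0 then a (inl c1) else if q == inl c1 then a (inl c0) else q.

Lemma hA_0 a : hA a (inl c0) = a (inl c1). Proof. by rewrite /hA eqxx. Qed.
Lemma hA_1 a : hA a (inl c1) = a (inl c0).
Proof. by rewrite /hA inl_eq eq_sym (negbTE Hc) eqxx. Qed.
Lemma hA_o a q : q != inl c0 -> q != inl c1 -> hA a q = q.
Proof. by rewrite /hA => /negbTE -> /negbTE ->. Qed.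

Lemma walk_down (a : diagT m) k j : walk e a k.+1 true j =
  match a (inl j) with inr q => inr q | inl j' => walk e a k false j' end.
Proof. by []. Qed.
Lemma walk_up (a : diagT m) k j : walk e a k.+1 false j =
  match e (inr j) with inl q => inl q | inr j' => walk e a k true j' end.
Proof. by []. Qed.

Lemma wd_l (a : diagT m) k j j' : a (inl j) = inl j' ->
  walk e a k.+1 true j = walk e a k false j'.
Proof. by move=> /= ->. Qed.
Lemma wd_r (a : diagT m) k j j' : a (inl j) = inr j' ->
  walk e a k.+1 true j = inr j'.
Proof. by move=> /= ->. Qed.
Lemma wu_l (a : diagT m) k j j' : e (inr j) = inl j' ->
  walk e a k.+1 false j = inl j'.
Proof. by move=> /= ->. Qed.
Lemma wu_r (a : diagT m) k j j' : e (inr j) = inr j' ->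
  walk e a k.+1 false j = walk e a k true j'.
Proof. by move=> /= ->. Qed.

Lemma stackE (a : diagT m) : is_diag a -> forall p,
  stack e a p = if p == inl c0 then inl c1 else if p == inl c1 then inl c0 else hA a (a p).
Proof.
move=> da p; have aK := diagK da; have aN := diagN da; have ai := diag_inj da.
have Hc' : c1 != c0 by rewrite eq_sym.
rewrite /stack ffunE.
have [k ->] : exists k, (2 * m).+2 = k.+4 by exists (2 * n); rewrite mulnS.
case: p => i; rewrite ?inl_eq ?inrl_eq.
  case: (eqVneq i c0) => [->|h0]; first by rewrite e_l0.
  case: (eqVneq i c1) => [->|h1]; first by rewrite e_l1.
  rewrite e_lo //.
  case Ha: (a (inl i)) => [j|j]; last by rewrite (wd_r _ Ha) hA_o.
  rewrite (wd_l _ Ha).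
  case: (eqVneq j c0) => [Ej|j0].
    rewrite Ej (wu_r _ _ e_r0) hA_0.
    case Hb: (a (inl c1)) => [j2|j2]; last by rewrite (wd_r _ Hb).
    rewrite (wd_l _ Hb).
    case: (eqVneq j2 c1) => [Ej2|j21]; first by move: (aN (inl c1)); rewrite Hb Ej2 eqxx.
    case: (eqVneq j2 c0) => [Ej2|j20].
      by have /eqP := ai (inl c1) (inl i) ltac:(by rewrite Hb Ha Ej Ej2); rewrite inl_eq eq_sym (negbTE h1).
    by rewrite (wu_l _ _ (e_ro j20 j21)).
  case: (eqVneq j c1) => [Ej|j1].
    rewrite Ej (wu_r _ _ e_r1) hA_1.
    case Hb: (a (inl c0)) => [j2|j2]; last by rewrite (wd_r _ Hb).
    rewrite (wd_l _ Hb).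
    case: (eqVneq j2 c0) => [Ej2|j20]; first by move: (aN (inl c0)); rewrite Hb Ej2 eqxx.
    case: (eqVneq j2 c1) => [Ej2|j21].
      by have /eqP := ai (inl c0) (inl i) ltac:(by rewrite Hb Ha Ej Ej2); rewrite inl_eq eq_sym (negbTE h0).
    by rewrite (wu_l _ _ (e_ro j20 j21)).
  by rewrite (wu_l _ _ (e_ro j0 j1)) hA_o // ?inl_eq.
case Ha: (a (inr i)) => [j|j]; last by rewrite hA_o.
case: (eqVneq j c0) => [Ej|j0].
  rewrite Ej (wu_r _ _ e_r0) hA_0.
  case Hb: (a (inl c1)) => [j2|j2]; last by rewrite (wd_r _ Hb).
  rewrite (wd_l _ Hb).
  case: (eqVneq j2 c1) => [Ej2|j21]; first by move: (aN (inl c1)); rewrite Hb Ej2 eqxx.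
  case: (eqVneq j2 c0) => [Ej2|j20].
    by have /eqP := ai (inl c1) (inr i) ltac:(by rewrite Hb Ha Ej Ej2); rewrite inlr_eq.
  by rewrite (wu_l _ _ (e_ro j20 j21)).
case: (eqVneq j c1) => [Ej|j1].
  rewrite Ej (wu_r _ _ e_r1) hA_1.
  case Hb: (a (inl c0)) => [j2|j2]; last by rewrite (wd_r _ Hb).
  rewrite (wd_l _ Hb).
  case: (eqVneq j2 c0) => [Ej2|j20]; first by move: (aN (inl c0)); rewrite Hb Ej2 eqxx.
  case: (eqVneq j2 c1) => [Ej2|j21].
    by have /eqP := ai (inl c0) (inr i) ltac:(by rewrite Hb Ha Ej Ej2); rewrite inlr_eq.
  by rewrite (wu_l _ _ (e_ro j20 j21)).
by rewrite (wu_l _ _ (e_ro j0 j1)) hA_o // ?inl_eq.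
Qed.

Lemma loops0 (a : diagT m) : a (inl c1) = inr c1 -> loops e a = 0%N.
Proof.
move=> H; rewrite /loops; apply/eqP; rewrite cards_eq0; apply/eqP/setP => j.
rewrite !inE; apply/negbTE/negP => /forallP Hj.
have nint1 : interior e a c1 = false by rewrite /interior H.
have c01 : connect (mid_rel e a) c0 c1.
  by apply: connect1; rewrite /mid_rel e_r0 eqxx orbT.
case: (eqVneq j c0) => [Ej|h0].
  by move/implyP: (Hj c1); rewrite nint1 Ej c01 => /(_ isT).
case: (eqVneq j c1) => [Ej|h1].
  by move/implyP: (Hj c1); rewrite nint1 Ej connect0 => /(_ isT).
by move/implyP: (Hj j); rewrite connect0 /interior e_ro //= andbF => /(_ isT).
Qed.


Local Notation fP := (Defs.mapP (lift c1)).

Lemma iota_f (d : diagT n) P : iota_g c1 d (fP P) = fP (d P).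
Proof. by case: P => i; rewrite ffunE /= liftK. Qed.
Lemma iota_l (d : diagT n) : iota_g c1 d (inl c1) = inr c1.
Proof. by rewrite ffunE /= unlift_none. Qed.
Lemma iota_r (d : diagT n) : iota_g c1 d (inr c1) = inl c1.
Proof. by rewrite ffunE /= unlift_none. Qed.
Lemma ptcases (p : Pt m) : [\/ p = inl c1, p = inr c1 | exists P, p = fP P].
Proof.
case: p => i; case: (unliftP c1 i) => [j ->|->].
- by apply: Or33; exists (inl j).
- by apply: Or31.
- by apply: Or33; exists (inr j).
- by apply: Or32.
Qed.
Lemma fP_inj : injective fP.
Proof. by case=> i [] j //= [] /(congr1 (unbump c1)); rewrite !bumpK => /val_inj ->. Qed.
Lemma fP_l P : (fP P == inl c1) = false.
Proof. by case: P => i //=; rewrite inl_eq eq_sym (negbTE (neq_lift _ _)). Qed.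
Lemma fP_r P : (fP P == inr c1) = false.
Proof. by case: P => i //=; rewrite inr_eq eq_sym (negbTE (neq_lift _ _)). Qed.

Lemma iota_diag (d : diagT n) : is_diag d -> is_diag (iota_g c1 d).
Proof.
move=> dd; apply: diagI => p; case: (ptcases p) => [->|->|[P ->]].
- by rewrite iota_l iota_r.
- by rewrite iota_r iota_l.
- by rewrite !iota_f diagK.
- by rewrite iota_l.
- by rewrite iota_r.
- by rewrite iota_f (inj_eq fP_inj) diagN.
Qed.

Variables (W : pred 'I_m) (W' : pred 'I_n).
Hypothesis hW : W c0 != W c1.
Hypothesis hW' : forall i, W (lift c1 i) = W' i.

Lemma colf P : colW W (fP P) = colW W' P.
Proof. by case: P => i; rewrite /colW /= hW'. Qed.

Lemma iota_wall (d : diagT n) : wall_ok W' d -> wall_ok W (iota_g c1 d).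
Proof.
move=> /wallP wd; apply/forallP => p; case: (ptcases p) => [->|->|[P ->]].
- by rewrite iota_l /colW /=; case: (W c1).
- by rewrite iota_r /colW /=; case: (W c1).
- by rewrite iota_f !colf.
Qed.

Definition lowr (P : Pt n) (q : Pt m) : Pt n :=
  if unlift c1 (idx q) is Some i then with_idx q i else P.

Lemma lowrK P q : q != inl c1 -> q != inr c1 -> fP (lowr P q) = q.
Proof.
case: q => i; rewrite /lowr /=; case: (unliftP c1 i) => [j ->|->] //=;
  by rewrite ?inl_eq ?inr_eq eqxx.
Qed.

Lemma lower_ex (b : diagT m) : is_diag b -> b (inl c1) = inr c1 ->
  exists y : diagT n, [/\ is_diag y, iota_g c1 y = b & (wall_ok W b -> wall_ok W' y)].
Proof.
move=> db hb; have bK := diagK db; have bN := diagN db; have bi := diag_inj db.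
have hb' : b (inr c1) = inl c1 by rewrite -hb bK.
pose y : diagT n := [ffun P => lowr P (b (fP P))].
have fy P : fP (y P) = b (fP P).
  rewrite ffunE lowrK //; apply/eqP => E.
    by move: (fP_r P); rewrite -hb' in E; rewrite (bi _ _ E) eqxx.
  by move: (fP_l P); rewrite -hb in E; rewrite (bi _ _ E) eqxx.
exists y; split.
- apply: diagI => P; first by apply: fP_inj; rewrite !fy bK.
  by rewrite -(inj_eq fP_inj) fy bN.
- apply/ffunP => p; case: (ptcases p) => [->|->|[P ->]].
  + by rewrite iota_l hb.
  + by rewrite iota_r hb'.
  + by rewrite iota_f fy.
- move=> /wallP wb; apply/forallP => P; by rewrite -!colf fy wb.
Qed.

Lemma bool3 (x y z w : bool) : x != y -> y != z -> z != w -> x != w.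
Proof. by case: x; case: y; case: z; case: w. Qed.

Section Surg.
Variable a : diagT m.
Hypothesis da : is_diag a.
Let aK := diagK da.
Let aN := diagN da.
Let ai := diag_inj da.
Let Hc' : c1 != c0. Proof. by rewrite eq_sym. Qed.

Definition D p := hA a (a p).

Lemma D_cases p : p != inl c0 -> p != inl c1 ->
  [\/ a p = inl c0 /\ D p = a (inl c1), a p = inl c1 /\ D p = a (inl c0)
    | [/\ a p != inl c0, a p != inl c1 & D p = a p]].
Proof.
move=> p0 p1; rewrite /D /hA.
case: (eqVneq (a p) (inl c0)) => E0; first by apply: Or31.
case: (eqVneq (a p) (inl c1)) => E1; first by apply: Or32.
by apply: Or33.
Qed.

Lemma Dnot p : p != inl c0 -> p != inl c1 -> (D p != inl c0) && (D p != inl c1).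
Proof.
move=> p0 p1; case: (D_cases p0 p1) => [[E ->]|[E ->]|[E0 E1 ->]].
- rewrite aN andbT; apply/eqP => E'; move/eqP: p1; apply.
  by apply: ai; rewrite E E'.
- rewrite aN /=; apply/eqP => E'; move/eqP: p0; apply.
  by apply: ai; rewrite E E'.
- by rewrite E0 E1.
Qed.

Lemma DK p : p != inl c0 -> p != inl c1 -> D (D p) = p.
Proof.
move=> p0 p1; have /andP[q0 q1] := Dnot p0 p1.
case: (D_cases p0 p1) => [[E E']|[E E']|[E0 E1 E']].
- have := D_cases q0 q1; rewrite E' aK; case=> [[/eqP]|[_ ->]|[_ /eqP]] //.
    by rewrite inl_eq (negbTE Hc').
  by rewrite -E aK.
- have := D_cases q0 q1; rewrite E' aK; case=> [[_ ->]|[/eqP]|[/eqP]] //.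
    by rewrite -E aK.
  by rewrite inl_eq (negbTE Hc).
- have := D_cases q0 q1; rewrite E' aK; case=> [[E2 _]|[E2 _]|[_ _ ->]] //.
  + by move/eqP: p0; rewrite E2.
  + by move/eqP: p1; rewrite E2.
Qed.

Lemma DN p : p != inl c0 -> p != inl c1 -> D p != p.
Proof.
move=> p0 p1; case: (D_cases p0 p1) => [[E ->]|[E ->]|[E0 E1 ->]] //.
- apply/eqP => E'; move: E; rewrite -E' aK => [[]] /eqP; by rewrite eq_sym (negbTE Hc).
- apply/eqP => E'; move: E; rewrite -E' aK => [[]] /eqP; by rewrite (negbTE Hc).
Qed.

Lemma Dwall p : wall_ok W a -> p != inl c0 -> p != inl c1 ->
  colW W (D p) != colW W p.
Proof.
move=> /wallP wa p0 p1.
have h01 : colW W (inl c0) != colW W (inl c1) by rewrite /colW /=; move: hW; case: (W c0); case: (W c1).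
case: (D_cases p0 p1) => [[E ->]|[E ->]|[E0 E1 ->]] //.
- move: h01 (wa (inl c1)) (wa p); rewrite E.
  by case: (colW W (a (inl c1))); case: (colW W p); case: (colW W (inl c0)); case: (colW W (inl c1)).
- move: h01 (wa (inl c0)) (wa p); rewrite E.
  by case: (colW W (a (inl c0))); case: (colW W p); case: (colW W (inl c0)); case: (colW W (inl c1)).
Qed.

Definition surg : diagT m := [ffun p =>
  if p == inl c1 then inr c1 else if p == inr c1 then inl c1
  else if p == inl c0 then D (inr c1)
  else if D p == inr c1 then inl c0 else D p].

Lemma surg_l1 : surg (inl c1) = inr c1. Proof. by rewrite ffunE eqxx. Qed.
Lemma surg_r1 : surg (inr c1) = inl c1. Proof. by rewrite ffunE inrl_eq eqxx. Qed.
Lemma surg_l0 : surg (inl c0) = D (inr c1).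
Proof. by rewrite ffunE inl_eq (negbTE Hc) inlr_eq eqxx. Qed.
Lemma surg_o p : p != inl c0 -> p != inl c1 -> p != inr c1 ->
  surg p = if D p == inr c1 then inl c0 else D p.
Proof. by move=> p0 p1 p2; rewrite ffunE (negbTE p0) (negbTE p1) (negbTE p2). Qed.

Let r0 : inr c1 != inl c0 :> Pt m. Proof. by []. Qed.
Let r1 : inr c1 != inl c1 :> Pt m. Proof. by []. Qed.

Lemma surg_diag : is_diag surg.
Proof.
have /andP[t0 t1] := Dnot r0 r1; have t2 := DN r0 r1; have tK := DK r0 r1.
apply: diagI => p.
  case: (eqVneq p (inl c1)) => [->|p1]; first by rewrite surg_l1 surg_r1.
  case: (eqVneq p (inr c1)) => [->|p2]; first by rewrite surg_r1 surg_l1.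
  case: (eqVneq p (inl c0)) => [->|p0].
    by rewrite surg_l0 surg_o // ?tK ?eqxx // eq_sym.
  rewrite (surg_o p0 p1 p2); case: (eqVneq (D p) (inr c1)) => [E|E].
    by rewrite surg_l0 -E DK.
  have /andP[q0 q1] := Dnot p0 p1.
  by rewrite surg_o // DK // (negbTE p2).
case: (eqVneq p (inl c1)) => [->|p1]; first by rewrite surg_l1.
case: (eqVneq p (inr c1)) => [->|p2]; first by rewrite surg_r1.
case: (eqVneq p (inl c0)) => [->|p0]; first by rewrite surg_l0.
rewrite (surg_o p0 p1 p2); case: (eqVneq (D p) (inr c1)) => [E|E].
  by rewrite eq_sym.
exact: DN.
Qed.

Lemma surg_wall : wall_ok W a -> wall_ok W surg.
Proof.
move=> wa; apply/forallP => p.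
have hc : colW W (inl c0) = colW W (inr c1).
  by rewrite /colW /=; move: hW; case: (W c0); case: (W c1).
case: (eqVneq p (inl c1)) => [->|p1].
  by rewrite surg_l1 /colW /=; case: (W c1).
case: (eqVneq p (inr c1)) => [->|p2].
  by rewrite surg_r1 /colW /=; case: (W c1).
case: (eqVneq p (inl c0)) => [->|p0].
  by rewrite surg_l0 hc Dwall.
rewrite (surg_o p0 p1 p2); case: (eqVneq (D p) (inr c1)) => [E|E].
  by rewrite hc -E Dwall.
exact: Dwall.
Qed.

Lemma surg_hA p : p != inl c0 -> p != inl c1 -> hA surg (surg p) = D p.
Proof.
move=> p0 p1.
case: (eqVneq p (inr c1)) => [->|p2]; first by rewrite surg_r1 hA_1 surg_l0.
rewrite (surg_o p0 p1 p2); case: (eqVneq (D p) (inr c1)) => [E|E].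
  by rewrite hA_0 surg_l1.
have /andP[q0 q1] := Dnot p0 p1.
by rewrite hA_o.
Qed.

Lemma stack_surg : stack e surg = stack e a.
Proof.
apply/ffunP => p; rewrite !stackE //; last exact: surg_diag.
case: ifP => // /negbT p0; case: ifP => // /negbT p1.
by rewrite surg_hA.
Qed.

End Surg.

Lemma key (a : diagT m) : is_diag a -> wall_ok W a ->
  exists y : diagT n, [&& is_diag y, wall_ok W' y & stack e (iota_g c1 y) == stack e a].
Proof.
move=> da wa; have [y [dy Ey wy]] := lower_ex (surg_diag da) (surg_l1 a).
exists y; rewrite dy wy ?surg_wall //= Ey stack_surg //.
Qed.

Definition ya (a : diagT m) : diagT n :=
  odflt [ffun P => P] [pick y | [&& is_diag y, wall_ok W' y & stack e (iota_g c1 y) == stack e a]].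

Lemma ya_spec a : is_diag a -> wall_ok W a ->
  [/\ is_diag (ya a), wall_ok W' (ya a) & stack e (iota_g c1 (ya a)) = stack e a].
Proof.
move=> da wa; rewrite /ya; case: pickP => [y /and3P[-> -> /eqP ->] //|none].
by have [y Hy] := key da wa; move: (none y); rewrite Hy.
Qed.

Variables (S : comPzRingType) (delta : S).

Definition inW k (V : pred 'I_k) (x : balg S k) :=
  forall d, x d != 0 -> is_diag d && wall_ok V d.
Definition iota_alg_g (y : balg S n) : balg S m :=
  [ffun c' => \sum_(d | iota_g c1 d == c') y d].

Lemma bmulE (x : balg S m) : bmul delta x (basis S e) =
  [ffun c => \sum_(a | is_diag a) x a * delta ^+ loops e a * (stack e a == c)%:R].
Proof.
apply/ffunP => c; rewrite !ffunE; apply: eq_bigr => a _.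
rewrite (bigD1 e) ?diag_e //= big1 ?addr0.
  by rewrite ffunE eqxx mulr1.
by move=> b /andP[_ hb]; rewrite ffunE (negbTE hb) mulr0 !mul0r.
Qed.

Lemma sum_group (A B : finType) (g : A -> B) (u : A -> S) (F : B -> S) :
  \sum_b (\sum_(a | g a == b) u a) * F b = \sum_a u a * F (g a).
Proof.
rewrite [RHS](partition_big g predT) //=; apply: eq_bigr => b _.
by rewrite big_distrl; apply: eq_bigr => a /eqP ->.
Qed.

Lemma sum_drop (A : finType) (P : pred A) (G : A -> S) :
  (forall a, ~~ P a -> G a = 0) -> \sum_(a | P a) G a = \sum_a G a.
Proof.
by move=> H; rewrite [RHS](bigID P) /= [X in _ + X]big1 ?addr0.
Qed.

Lemma sum_nz (A : finType) (P : pred A) (G : A -> S) :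
  \sum_(a | P a) G a != 0 -> exists a, P a && (G a != 0).
Proof.
move=> nz; apply/existsP; apply: contraNT nz => /existsPn H.
by rewrite big1 // => a Pa; move: (H a); rewrite Pa /= negbK => /eqP.
Qed.

Lemma iota_inW (y : balg S n) : inW W' y -> inW W (iota_alg_g y).
Proof.
move=> hy d; rewrite ffunE => /sum_nz [d0 /andP[/eqP <- nz]].
by case/andP: (hy d0 nz) => dd wd; rewrite iota_diag // iota_wall.
Qed.

Lemma gen_main z :
  (exists2 x : balg S m, inW W x & z = bmul delta x (basis S e)) <->
  (exists2 y : balg S n, inW W' y & z = bmul delta (iota_alg_g y) (basis S e)).
Proof.
split; last first.
  by move=> [y hy ->]; exists (iota_alg_g y) => //; exact: iota_inW.
move=> [x hx ->].
pose L a := delta ^+ loops e a.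
pose Y : balg S n := [ffun d => \sum_(a | ya a == d) x a * L a].
have hY : inW W' Y.
  move=> d; rewrite ffunE => /sum_nz [a /andP[/eqP <- nz]].
  have {}nz : x a != 0 by apply: contraNneq nz => ->; rewrite mul0r.
  by case/andP: (hx a nz) => da wa; case: (ya_spec da wa) => -> ->.
exists Y => //.
rewrite !bmulE; apply/ffunP => c; rewrite !ffunE.
rewrite sum_drop; last first.
  move=> a da; case: (eqVneq (x a) 0) => [->|nz]; first by rewrite !mul0r.
  by case/andP: (hx a nz) => da'; rewrite da' in da.
rewrite [RHS]sum_drop; last first.
  move=> a' da'; rewrite ffunE big1 ?mul0r // => d /eqP E.
  case: (eqVneq (Y d) 0) => // nz.
  by case/andP: (hY d nz) => dd _; move: da'; rewrite -E iota_diag.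
under [RHS]eq_bigr => a' _ do rewrite ffunE -mulrA.
rewrite sum_group.
under [RHS]eq_bigr => d _ do rewrite loops0 ?iota_l // expr0 mul1r ffunE.
rewrite (sum_group ya (fun a => x a * L a) (fun d => (stack e (iota_g c1 d) == c)%:R)).
apply: eq_bigr => a _.
case: (eqVneq (x a) 0) => [->|nz]; first by rewrite !mul0r.
by case/andP: (hx a nz) => da wa; case: (ya_spec da wa) => _ _ ->.
Qed.
End Gen.

Lemma walledE k r (d : diagT k) : walled r d = wall_ok (fun i : 'I_k => (i < r)%N) d.
Proof.
apply: eq_forallb => p; rewrite /colW.
by case: (is_top p); case: (is_top (d p)); case: (idx p < r)%N; case: (idx (d p) < r)%N.
Qed.

Lemma in_walledE (S : comPzRingType) k r (x : balg S k) :
  in_walled r x <-> inW (fun i : 'I_k => (i < r)%N) x.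
Proof. by split=> H d /H; rewrite walledE. Qed.

Lemma e_sym k (a b : 'I_k) : a != b -> e_d a b = e_d b a.
Proof.
move=> hab; apply/ffunP => p; rewrite !ffunE.
  case: (eqVneq (idx p) a) => [Ea|ha] //.
  by rewrite Ea (negbTE hab).

Qed.

Unset Implicit Arguments.

Theorem mainTheorem14 (S : comPzRingType) (delta : S) (r s : nat) :
  let e := basis S (e_d (ord0 : 'I_(r + s).+1) ord_max) in
  ((1 <= r)%N ->
    forall z : balg S (r + s).+1,
      (exists2 x : balg S (r + s).+1, in_walled r x & z = bmul delta x e) <->
      (exists2 y : balg S (r + s), in_walled r y &
                     z = bmul delta (iota_alg y) e)) /\
  ((1 <= s)%N ->
    forall z : balg S (r + s).+1,
      (exists2 x : balg S (r + s).+1, in_walled r.+1 x & z = bmul delta x e) <->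
      (exists2 y : balg S (r + s), in_walled r y &
                     z = bmul delta (iota'_alg y) e)).
Proof.
move=> e; split.
  move=> r1 z.
  have Hc : (ord0 : 'I_(r + s).+1) != ord_max.
    by rewrite -(inj_eq val_inj) /= eq_sym -lt0n ltn_addr.
  have hW : (fun i : 'I_(r + s).+1 => (i < r)%N) ord0 != (fun i : 'I_(r + s).+1 => (i < r)%N) ord_max.
    by rewrite /= r1 -leqNgt leq_addr.
  have hW' : forall i : 'I_(r + s).+1.-1,
      (fun i : 'I_(r + s).+1 => (i < r)%N) (lift ord_max i) = (fun i : 'I_(r + s) => (i < r)%N) i.
    case=> i Hi; rewrite /= /bump; have -> : (r + s <= i)%N = false by apply/negbTE; rewrite -ltnNge; exact: Hi.
    by [].
  have G := @gen_main _ _ _ Hc (fun i : 'I_(r+s).+1 => (i < r)%N) (fun i : 'I_(r+s) => (i < r)%N) hW hW' _ delta z.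
  split.
    move=> [x hx E]; have [y hy E'] := (proj1 G) (ex_intro2 _ _ x ((proj1 (in_walledE _ _)) hx) E).
    by exists y => //; apply/in_walledE.
  move=> [y hy E]; have [x hx E'] := (proj2 G) (ex_intro2 _ _ y ((proj1 (in_walledE _ _)) hy) E).
  by exists x => //; apply/in_walledE.
move=> s1 z.
have Hc : (ord_max : 'I_(r + s).+1) != ord0.
  by rewrite -(inj_eq val_inj) /= -lt0n addn_gt0 s1 orbT.
have hW : (fun i : 'I_(r + s).+1 => (i < r.+1)%N) ord_max != (fun i : 'I_(r + s).+1 => (i < r.+1)%N) ord0.
  have lt : (r < r + s)%N by rewrite -{1}(addn0 r) ltn_add2l.
  by rewrite /= ltnS leqNgt lt.
have hW' : forall i : 'I_(r + s).+1.-1,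
    (fun i : 'I_(r + s).+1 => (i < r.+1)%N) (lift ord0 i) = (fun i : 'I_(r + s) => (i < r)%N) i.
  by move=> i; rewrite /= /bump leq0n add1n ltnS.
have G := @gen_main _ _ _ Hc (fun i : 'I_(r+s).+1 => (i < r.+1)%N) (fun i : 'I_(r+s) => (i < r)%N) hW hW' _ delta z.
have Ee : e = basis S (e_d (ord_max : 'I_(r + s).+1) ord0) by rewrite /e e_sym // eq_sym.
rewrite Ee.
split.
  move=> [x hx E]; have [y hy E'] := (proj1 G) (ex_intro2 _ _ x ((proj1 (in_walledE _ _)) hx) E).
  by exists y => //; apply/in_walledE.
move=> [y hy E]; have [x hx E'] := (proj2 G) (ex_intro2 _ _ y ((proj1 (in_walledE _ _)) hy) E).
by exists x => //; apply/in_walledE.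
Qed.
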